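(* For every nominal $\mathrm{Perm}$-set $X$, there is an isomorphism of nominal $\mathrm{Sb}$-sets $F(X^{( * )})\cong (F X)^*$.
   Context: Atoms $\mathbb{A}$ (countably infinite); $\mathrm{Sb}$ = monoid of finitely-non-identity functions $\mathbb{A}\to\mathbb{A}$; $\mathrm{Perm}$ its group of bijections. For $M\in\{\mathrm{Sb},\mathrm{Perm}\}$, a nominal $M$-set is an $M$-set in which every element $x$ has a finite support $C$ ($m_1|_C=m_2|_C\Rightarrow m_1x=m_2x$). Elements $x,y$ are separated ($x\perp y$) if they have disjoint supports; $X\otimes Y=\{(x,y)\mid x\perp y\}$. Separated powers: $X^{(0)}=1$, $X^{(n+1)}=X^{(n)}\otimes X$; $X^{( * )}=\coprod_n X^{(n)}$ (separated words). For a nominal $\mathrm{Sb}$-set $Z$, $Z^*=\coprod_n Z^n$ (all words) with pointwise action. $F(X)=(\mathrm{Sb}\times X)/{\sim}$, $\sim$ the least equivalence containing $(m,gx)\sim(mg,x)$ ($g\in\mathrm{Perm}$) and $(m,x)\sim(m',x)$ if $m|_C=m'|_C$ for a $\mathrm{Perm}$-support $C$ of $x$; action $n\cdot[m,x]=[nm,x]$. *)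

(* Defs.v *)
From Stdlib Require Import ClassicalEpsilon Relation_Operators.
From mathcomp Require Import all_boot.

Set Implicit Arguments.
Unset Strict Implicit.
Unset Printing Implicit Defensive.

(* Atoms: A = nat (countably infinite). *)

Definition isSb (f : nat -> nat) : Prop :=
  exists s : seq nat, forall a, a \notin s -> f a = a.
Definition isPerm (f : nat -> nat) : Prop := isSb f /\ bijective f.

Definition Sbt := {f : nat -> nat | isSb f}.
Definition Permt := {f : nat -> nat | isPerm f}.

Lemma isSb_id : isSb id.
Proof. by exists [::]. Qed.

Lemma isSb_comp f g : isSb f -> isSb g -> isSb (f \o g).
Proof.
move=> [s Hs] [t Ht]; exists (t ++ s) => a; rewrite mem_cat negb_or => /andP[Ha Hb].
by rewrite /= Ht // Hs.
Qed.

Lemma isPerm_id : isPerm id.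
Proof. by split; [exact: isSb_id | exists id]. Qed.

Lemma isPerm_comp f g : isPerm f -> isPerm g -> isPerm (f \o g).
Proof. by move=> [Sf Bf] [Sg Bg]; split; [exact: isSb_comp | exact: bij_comp]. Qed.

Definition sid : Sbt := exist _ id isSb_id.
Definition scomp (m n : Sbt) : Sbt :=
  exist _ (proj1_sig m \o proj1_sig n) (isSb_comp (proj2_sig m) (proj2_sig n)).
Definition pid : Permt := exist _ id isPerm_id.
Definition pcomp (g h : Permt) : Permt :=
  exist _ (proj1_sig g \o proj1_sig h) (isPerm_comp (proj2_sig g) (proj2_sig h)).
Definition sb_of_perm (g : Permt) : Sbt :=
  exist _ (proj1_sig g) (proj1 (proj2_sig g)).

Record pset := PSet { pcar : Type; pact : Permt -> pcar -> pcar }.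
Record sset := SSet { scar : Type; sact : Sbt -> scar -> scar }.

Definition psupp (X : pset) (C : seq nat) (x : pcar X) : Prop :=
  forall g1 g2 : Permt, {in C, proj1_sig g1 =1 proj1_sig g2} ->
    @pact X g1 x = @pact X g2 x.
Definition ssupp (S : sset) (C : seq nat) (x : scar S) : Prop :=
  forall m1 m2 : Sbt, {in C, proj1_sig m1 =1 proj1_sig m2} ->
    @sact S m1 x = @sact S m2 x.
Arguments psupp : clear implicits.
Arguments ssupp : clear implicits.

Definition is_nominal_perm (X : pset) : Prop :=
  [/\ forall x, @pact X pid x = x,
      forall g h x, @pact X (pcomp g h) x = @pact X g (@pact X h x)
    & forall x, exists C : seq nat, psupp X C x].

Definition is_nominal_sb (S : sset) : Prop :=
  [/\ forall x, @sact S sid x = x,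
      forall m n x, @sact S (scomp m n) x = @sact S m (@sact S n x)
    & forall x, exists C : seq nat, ssupp S C x].

Definition sset_iso (A B : sset) : Prop :=
  exists f : scar A -> scar B,
    bijective f /\ forall m x, f (@sact A m x) = @sact B m (f x).

Definition separated (A B : pset) (a : pcar A) (b : pcar B) : Prop :=
  exists C D : seq nat, [/\ psupp A C a, psupp B D b & forall c, c \in C -> c \notin D].
Arguments separated : clear implicits.

Definition pwords (X : pset) : pset := PSet (fun g => map (@pact X g)).

(* separated words: X^(0) = 1, X^(n+1) = X^(n) (x) X, represented as
   flat sequences: rcons w x is separated iff w is and w is separated from x *)
Inductive sepw (X : pset) : seq (pcar X) -> Prop :=
| sepw0 : @sepw X [::]
| sepwS w x : @sepw X w -> separated (pwords X) X w x -> @sepw X (rcons w x).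
Arguments sepw : clear implicits.
Arguments sepw0 : clear implicits.

Lemma psupp_act (X : pset) :
  (forall g h x, @pact X (pcomp g h) x = @pact X g (@pact X h x)) ->
  forall g C x, psupp X C x -> psupp X (map (proj1_sig g) C) (@pact X g x).
Proof.
move=> Hc g C x H g1 g2 E; rewrite -!Hc; apply: H => c cC /=.
by apply: E; apply: map_f.
Qed.

Lemma sepw_act (X : pset) :
  (forall g h x, @pact X (pcomp g h) x = @pact X g (@pact X h x)) ->
  forall g w, sepw X w -> sepw X (map (@pact X g) w).
Proof.
move=> Hc g w; elim=> [|w' x _ IH [C [D [HC HD Hdis]]]]; first exact: sepw0.
rewrite map_rcons; apply: sepwS => //.
have Hw : forall g h w, @pact (pwords X) (pcomp g h) w = @pact (pwords X) g (@pact (pwords X) h w).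
  by move=> g1 h1 w1 /=; rewrite -map_comp; apply: eq_map => y; rewrite /= Hc.
exists (map (proj1_sig g) C), (map (proj1_sig g) D); split.
- exact: (psupp_act Hw).
- exact: psupp_act.
- move=> c /mapP[a aC ->]; apply/negP => /mapP[b bD] eab.
  have [_ Bg] := proj2_sig g.
  have e := bij_inj Bg eab; move: (Hdis a aC); by rewrite e bD.
Qed.

Definition Xstar (X : pset) (HX : is_nominal_perm X) : pset :=
  let: And3 _ Hc _ := HX in
  @PSet {w : seq (pcar X) | sepw X w}
    (fun g w => exist _ (map (@pact X g) (proj1_sig w))
                      (sepw_act Hc g (proj2_sig w))).

Definition quot (A : Type) (R : A -> A -> Prop) := {P : A -> Prop | exists a, P = R a}.
Definition cls (A : Type) (R : A -> A -> Prop) (a : A) : quot R :=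
  exist _ (R a) (ex_intro _ a erefl).
Definition repr (A : Type) (R : A -> A -> Prop) (q : quot R) : A :=
  proj1_sig (constructive_indefinite_description _ (proj2_sig q)).

Inductive Fgen (X : pset) : Sbt * pcar X -> Sbt * pcar X -> Prop :=
| Fgen_perm (m : Sbt) (g : Permt) (x : pcar X) :
    Fgen (m, @pact X g x) (scomp m (sb_of_perm g), x)
| Fgen_supp (m m' : Sbt) (x : pcar X) (C : seq nat) :
    psupp X C x -> {in C, proj1_sig m =1 proj1_sig m'} -> Fgen (m, x) (m', x).

Definition Fequiv (X : pset) := clos_refl_sym_trans _ (@Fgen X).

Definition F (X : pset) : sset :=
  @SSet (quot (@Fequiv X))
    (fun n q => let p := repr q in cls (@Fequiv X) (scomp n p.1, p.2)).

Definition swords (Z : sset) : sset := @SSet (seq (scar Z)) (fun m => map (@sact Z m)).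

(* Main.v *)
From Stdlib Require Import ClassicalEpsilon Relation_Operators Operators_Properties ProofIrrelevance FunctionalExtensionality PropExtensionality.
Require Import Defs.
From mathcomp Require Import all_boot.
From mathcomp Require Import zify.
Set Implicit Arguments. Unset Strict Implicit. Unset Printing Implicit Defensive.
Notation pcomp := Defs.pcomp.
Notation repr := Defs.repr.

Definition tr (x y a : nat) := if a == x then y else if a == y then x else a.
Lemma tr_invol x y : involutive (tr x y).
Proof.
move=> a; rewrite /tr.
case: (eqVneq a x) => [->|ax]; first by rewrite eqxx; case: eqVneq.
case: (eqVneq a y) => [->|ay]; first by rewrite eqxx.
by rewrite (negbTE ax) (negbTE ay).
Qed.
Lemma isPerm_tr x y : isPerm (tr x y).
Proof.
split; last by exists (tr x y); apply: tr_invol.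
exists [:: x; y] => a; rewrite !inE negb_or => /andP[ax ay].
by rewrite /tr (negbTE ax) (negbTE ay).
Qed.

Lemma ext_perm (T : seq nat) (f : nat -> nat) :
  {in T &, injective f} -> exists g : Permt, {in T, proj1_sig g =1 f}.
Proof.
elim: T => [|t T IH] Hinj; first by exists pid.
have Hinj' : {in T &, injective f}.
  by move=> a b Ha Hb; apply: Hinj; rewrite inE ?Ha ?Hb orbT.
have [g Hg] := IH Hinj'.
case: (boolP (t \in T)) => tT.
  by exists g => a; rewrite inE => /orP[/eqP->|]; apply: Hg.
pose tg : Permt := exist _ (tr (proj1_sig g t) (f t)) (isPerm_tr _ _).
exists (Defs.pcomp tg g) => a; rewrite inE => /orP[/eqP->|aT] /=.
  by rewrite /tr eqxx.
have [_ [gi gK _]] := proj2_sig g.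
rewrite /tr.
case: eqP => [e|_].
  by move: (can_inj gK e) => eat; rewrite -eat aT in tT.
rewrite (Hg a aT).
case: eqP => // e.
have eat : a = t by apply: Hinj; rewrite ?inE ?aT ?eqxx ?orbT.
by rewrite -eat aT in tT.
Qed.

Lemma perm_inv (g : Permt) : exists gi : Permt,
  cancel (proj1_sig g) (proj1_sig gi) /\ cancel (proj1_sig gi) (proj1_sig g).
Proof.
case: g => f [[s Hs] [fi K1 K2]].
have Sb : isSb fi.
  by exists s => a Ha; have := K1 a; rewrite Hs.
by exists (exist _ fi (conj Sb (Bijective K2 K1))).
Qed.

Lemma le_sumn a s : a \in s -> a <= sumn s.
Proof.
elim: s => //= b s IH; rewrite inE => /orP[/eqP->|/IH]; first exact: leq_addr.
by move=> h; apply: (leq_trans h); apply: leq_addl.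
Qed.

Section Gen.
Variable Y : pset.
Local Notation act := (@pact Y).
Hypothesis Hid : forall y, act pid y = y.
Hypothesis Hc : forall g h y, act (pcomp g h) y = act g (act h y).
Hypothesis Hs : forall y, exists C, psupp Y C y.

Lemma act_ext g1 g2 y : proj1_sig g1 =1 proj1_sig g2 -> act g1 y = act g2 y.
Proof. by move=> E; have [C HC] := Hs y; apply: HC => a _; apply: E. Qed.

Lemma act_invK g gi y : cancel (proj1_sig g) (proj1_sig gi) ->
  act gi (act g y) = y.
Proof.
by move=> K; rewrite -Hc -{2}(Hid y); apply: act_ext => a /=; rewrite K.
Qed.

Lemma supp_fix C y g : psupp Y C y -> {in C, proj1_sig g =1 id} -> act g y = y.
Proof. by move=> H E; rewrite -{2}(Hid y); apply: H. Qed.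

Lemma supp_inter C D y : psupp Y C y -> psupp Y D y ->
  psupp Y [seq a <- C | a \in D] y.
Proof.
move=> HC HD.
suff Hfix : forall g : Permt, {in C, forall a, a \in D -> proj1_sig g a = a} ->
    act g y = y.
  move=> g1 g2 E.
  have [g2i [K1 K2]] := perm_inv g2.
  have -> : act g1 y = act g2 (act (pcomp g2i g1) y).
    by rewrite -Hc; apply: act_ext => a /=; rewrite K2.
  rewrite Hfix // => a aC aD /=.
  have -> : proj1_sig g1 a = proj1_sig g2 a by apply: E; rewrite mem_filter aD.
  by rewrite K1.
move=> g Hg.
have [_ [gi gK _]] := proj2_sig g.
pose M := sumn (C ++ D ++ map (proj1_sig g) C).
have leM : forall a, a \in C ++ D ++ map (proj1_sig g) C -> a <= M by move=> a; apply: le_sumn.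
pose fp a := if (a \in C) && (a \notin D) then M.+1 + index a C else a.
have [p Hp] : exists p : Permt, {in C ++ D, proj1_sig p =1 fp}.
  apply: ext_perm => a b Ha Hb; rewrite /fp.
  case: (boolP ((a \in C) && (a \notin D))) => [/andP[aC aD]|na];
  case: (boolP ((b \in C) && (b \notin D))) => [/andP[bC bD]|nb].
  - by move/addnI => e; rewrite -(nth_index 0 aC) e nth_index.
  - move=> e; have := leM b; rewrite !mem_cat; move: Hb; rewrite mem_cat => /orP[->|->];
      rewrite ?orbT // => /(_ isT); by rewrite -e ltnNge leq_addr.
  - move=> e; have := leM a; rewrite !mem_cat; move: Ha; rewrite mem_cat => /orP[->|->];
      rewrite ?orbT // => /(_ isT); by rewrite e ltnNge leq_addr.
  - by [].
have py : act p y = y.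
  by apply: (supp_fix HD) => a aD; rewrite Hp ?mem_cat ?aD ?orbT // /fp aD andbF.
pose C' := map fp C.
have HC' : psupp Y C' y.
  rewrite -py.
  have -> : C' = map (proj1_sig p) C.
    by apply/esym/eq_in_map => a aC; rewrite Hp // mem_cat aC.
  exact: psupp_act.
pose fh a := if a \in C then proj1_sig g a else a.
have [h Hh] : exists h : Permt, {in C ++ C', proj1_sig h =1 fh}.
  apply: ext_perm => a b Ha Hb; rewrite /fh.
  have bigC' : forall b, b \in C' -> b \notin C -> M < b.
    move=> c /mapP[d dC ->]; rewrite /fp; case: ifP => [_ _|]; first by rewrite addSn ltnS leq_addr.
    by move=> _; rewrite dC.
  case: (boolP (a \in C)) => aC; case: (boolP (b \in C)) => bC.
  - by move=> e; apply: (can_inj gK e).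
  - move=> e; have bC' : b \in C' by move: Hb; rewrite mem_cat (negbTE bC).
    have := bigC' b bC' bC; rewrite -e ltnNge leM //.
    by rewrite !mem_cat map_f ?orbT.
  - move=> e; have aC' : a \in C' by move: Ha; rewrite mem_cat (negbTE aC).
    have := bigC' a aC' aC; rewrite e ltnNge leM //.
    by rewrite !mem_cat map_f ?orbT.
  - by [].
have -> : act g y = act h y.
  by apply: HC => a aC; rewrite Hh ?mem_cat ?aC // /fh aC.
apply: (supp_fix HC') => b bC'; rewrite Hh ?mem_cat ?bC' ?orbT // /fh.
case: ifP => // bC.
move: bC'; case/mapP => d dC bd.
move: bC; rewrite bd /fp; case: ifP => [_ |].
  move=> inC; have := leM (M.+1 + index d C); rewrite mem_cat inC => /(_ isT).
  by rewrite addSn ltnNge leq_addr.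
move/negbT; rewrite dC /= negbK => dD _; exact: Hg.
Qed.
End Gen.

Lemma sig_eq (A : Type) (P : A -> Prop) (x y : sig P) : proj1_sig x = proj1_sig y -> x = y.
Proof. case: x => x px; case: y => y py /= e; subst y; by rewrite (proof_irrelevance _ px py). Qed.

Section FY.
Variable Y : pset.
Local Notation act := (@pact Y).
Hypothesis Hid : forall y, act pid y = y.
Hypothesis Hc : forall g h y, act (pcomp g h) y = act g (act h y).
Hypothesis Hs : forall y, exists C, psupp Y C y.
Local Notation FR := (@Fequiv Y).

Lemma FR_refl p : FR p p. Proof. exact: rst_refl. Qed.
Lemma FR_sym p q : FR p q -> FR q p. Proof. exact: rst_sym. Qed.
Lemma FR_trans p q r : FR p q -> FR q r -> FR p r. Proof. exact: rst_trans. Qed.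
Lemma FR_step p q : Fgen p q -> FR p q. Proof. exact: rst_step. Qed.

Lemma cls_eq p q : FR p q -> cls FR p = cls FR q.
Proof.
move=> H; apply: sig_eq => /=.
apply: functional_extensionality => r; apply: propositional_extensionality; split=> Hr.
  exact: FR_trans (FR_sym H) Hr.
exact: FR_trans H Hr.
Qed.

Lemma cls_inj p q : cls FR p = cls FR q -> FR p q.
Proof. by move/(f_equal (@proj1_sig _ _)) => /= ->; apply: FR_refl. Qed.

Lemma cls_repr q : cls FR (repr q) = q.
Proof.
case: q => P pf; rewrite /repr /=.
case: (constructive_indefinite_description _ pf) => a /= Ha.
by apply: sig_eq => /=; rewrite Ha.
Qed.

Lemma repr_cls p : FR p (repr (cls FR p)).
Proof.
rewrite /repr /=; case: (constructive_indefinite_description _ _) => b /= ->.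
exact: FR_refl.
Qed.

Lemma Fsame (m m' : Sbt) x : proj1_sig m =1 proj1_sig m' -> FR (m, x) (m', x).
Proof. by move=> E; have [C HC] := Hs x; apply: FR_step; apply: (Fgen_supp HC) => a _. Qed.

Lemma FR_congr n p q : FR p q -> FR (scomp n p.1, p.2) (scomp n q.1, q.2).
Proof.
elim=> {p q} [p q [m g x|m m' x C HC E]| p | p q _ IH | p q r _ IH1 _ IH2] /=.
- apply: FR_trans; first exact: (FR_step (Fgen_perm (scomp n m) g x)).
  exact: Fsame.
- by apply: FR_step; apply: (Fgen_supp HC) => a aC /=; rewrite E.
- exact: FR_refl.
- exact: FR_sym.
- exact: FR_trans IH1 IH2.
Qed.

Lemma act_cls n p : @sact (F Y) n (cls FR p) = cls FR (scomp n p.1, p.2).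
Proof. by apply: cls_eq; apply: FR_congr; apply: FR_sym; apply: repr_cls. Qed.

Lemma F_nominal : is_nominal_sb (F Y).
Proof.
split.
- move=> q; rewrite -(cls_repr q) act_cls; apply: cls_eq.
  by case: (repr q) => m x; apply: Fsame.
- move=> m n q; rewrite -(cls_repr q) !act_cls; apply: cls_eq.
  by case: (repr q) => k x; apply: Fsame.
- move=> q; rewrite -(cls_repr q); case: (repr q) => m x.
  have [C HC] := Hs x.
  exists (map (proj1_sig m) C) => n1 n2 E; rewrite !act_cls; apply: cls_eq.
  by apply: FR_step; apply: (Fgen_supp HC) => a aC /=; apply: E; apply: map_f.
Qed.

Definition ER (p q : Sbt * pcar Y) := exists (g : Permt) (C : seq nat),
  [/\ psupp Y C p.2, q.2 = act g p.2 & {in C, forall c, proj1_sig p.1 c = proj1_sig q.1 (proj1_sig g c)}].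

Lemma ER_FR p q : ER p q -> FR p q.
Proof.
case: p q => [a x] [b y] [g [C [HC /= -> E]]].
apply: (@FR_trans _ (scomp b (sb_of_perm g), x)).
  by apply: FR_step; apply: (Fgen_supp HC) => c cC /=; apply: E.
by apply: FR_sym; apply: FR_step; apply: Fgen_perm.
Qed.

Lemma FR_ER p q : FR p q -> ER p q.
Proof.
elim=> {p q} [p q [m g x|m m' x C HC E]| [m x] | p q _ [g [C [HC H2 H3]]] | p q r _ [g [C [HC H2 H3]]] _ [h [D [HD H2' H3']]]] /=.
- have [gi [K1 K2]] := perm_inv g.
  have [C HC] := Hs x.
  exists gi, (map (proj1_sig g) C); split => /=.
  + exact: psupp_act.
  + by rewrite act_invK.
  + by move=> c /mapP[a aC ->] /=; rewrite K1.
- by exists pid, C; split => //; rewrite Hid.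
- have [C HC] := Hs x; by exists pid, C; split => //; rewrite Hid.
- have [gi [K1 K2]] := perm_inv g.
  exists gi, (map (proj1_sig g) C); split => /=.
  + by rewrite H2; exact: psupp_act.
  + by rewrite H2 act_invK.
  + by move=> c /mapP[a aC ->] /=; rewrite K1 H3.
- have [gi [K1 K2]] := perm_inv g.
  exists (pcomp h g), [seq a <- C | a \in map (proj1_sig gi) D]; split => /=.
  + apply: supp_inter => //.
    have -> : p.2 = act gi q.2 by rewrite H2 act_invK.
    exact: psupp_act.
  + by rewrite H2' H2 Hc.
  + move=> c; rewrite mem_filter => /andP[/mapP[d dD ->] cC].
    by rewrite H3 // K2 H3'.
Qed.
End FY.

Lemma psupp_mono (Y : pset) C D y : psupp Y C y -> {subset C <= D} -> psupp Y D y.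
Proof. by move=> H S g1 g2 E; apply: H => a aC; apply: E; apply: S. Qed.

Lemma ssupp_mono (Y : sset) C D y : ssupp Y C y -> {subset C <= D} -> ssupp Y D y.
Proof. by move=> H S g1 g2 E; apply: H => a aC; apply: E; apply: S. Qed.

Section XS.
Variable X : pset.
Local Notation act := (@pact X).
Hypothesis Hid : forall y, act pid y = y.
Hypothesis Hc : forall g h y, act (pcomp g h) y = act g (act h y).
Hypothesis Hs : forall y, exists C, psupp X C y.
Local Notation PW := (pwords X).
Local Notation XS := (Xstar (And3 Hid Hc Hs)).
Local Notation FR := (@Fequiv X).

Lemma pw_id w : @pact PW pid w = w.
Proof. by rewrite /= (eq_map Hid) map_id. Qed.
Lemma pw_c g h w : @pact PW (pcomp g h) w = @pact PW g (@pact PW h w).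
Proof. by rewrite /= -map_comp; apply: eq_map => y /=; rewrite Hc. Qed.

Lemma pw_cons C x w : psupp PW C (x :: w) <-> psupp X C x /\ psupp PW C w.
Proof.
split.
  move=> H; split=> g1 g2 E; have /= [] := H g1 g2 E => //.
move=> [H1 H2] g1 g2 E /=; congr cons; [exact: H1 | exact: H2].
Qed.

Lemma pw_nil C : psupp PW C [::].
Proof. by []. Qed.

Lemma pw_rcons C x w : psupp PW C (rcons w x) <-> psupp PW C w /\ psupp X C x.
Proof.
split.
  move=> H; split=> g1 g2 E; have /= := H g1 g2 E; rewrite !map_rcons => /rcons_inj [] //.
move=> [H1 H2] g1 g2 E /=; rewrite !map_rcons; congr rcons; [exact: H1 | exact: H2].
Qed.

Lemma pw_supp_ex w : exists C, psupp PW C w.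
Proof.
elim: w => [|x w [C HC]]; first by exists [::].
have [D HD] := Hs x.
exists (D ++ C); apply/pw_cons; split.
  by apply: psupp_mono HD _ => a; rewrite mem_cat => ->.
by apply: psupp_mono HC _ => a; rewrite mem_cat => ->; rewrite orbT.
Qed.

Lemma XS_supp C (W : pcar XS) : psupp XS C W <-> psupp PW C (proj1_sig W).
Proof.
split=> H g1 g2 E.
  by have := H g1 g2 E; move/(f_equal (@proj1_sig _ _)).
by apply: sig_eq => /=; apply: H.
Qed.

Lemma XS_id W : @pact XS pid W = W.
Proof. by apply: sig_eq; apply: pw_id. Qed.
Lemma XS_c g h W : @pact XS (pcomp g h) W = @pact XS g (@pact XS h W).
Proof. by apply: sig_eq; apply: pw_c. Qed.
Lemma XS_s W : exists C, psupp XS C W.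
Proof. by have [C HC] := pw_supp_ex (proj1_sig W); exists C; apply/XS_supp. Qed.

Definition clsmap (m : Sbt) (w : seq (pcar X)) := map (fun x => cls FR (m, x)) w.

Lemma clsmap_supp C w (m m' : Sbt) : psupp PW C w -> {in C, proj1_sig m =1 proj1_sig m'} ->
  clsmap m w = clsmap m' w.
Proof.
elim: w => //= x w IH /pw_cons [Hx Hw] E; rewrite IH //; congr cons.
by apply: cls_eq; apply: FR_step; apply: Fgen_supp Hx E.
Qed.

Lemma clsmap_perm m g w : clsmap m (map (act g) w) = clsmap (scomp m (sb_of_perm g)) w.
Proof.
rewrite /clsmap -map_comp; apply: eq_map => x /=.
by apply: cls_eq; apply: FR_step; apply: Fgen_perm.
Qed.

Definition Phi (q : scar (F XS)) : seq (scar (F X)) :=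
  clsmap (repr q).1 (proj1_sig (repr q).2).

Lemma Phi_cls p : Phi (cls (@Fequiv XS) p) = clsmap p.1 (proj1_sig p.2).
Proof.
rewrite /Phi; move: (repr_cls p); move: (repr _) => p'.
elim=> {p p'} [p q [m g W|m m' W C HC E]| p | p q _ IH | p q r _ IH1 _ IH2] //=.
- by rewrite clsmap_perm.
- by apply/esym; apply: clsmap_supp E; apply/XS_supp.
- by rewrite IH2.
Qed.

Lemma Phi_equiv m q : Phi (@sact (F XS) m q) = map (@sact (F X) m) (Phi q).
Proof.
rewrite -(cls_repr q) (act_cls XS_s) !Phi_cls /clsmap -map_comp /=.
by apply: eq_map => x /=; symmetry; apply: (act_cls Hs).
Qed.

Lemma sepw_rcons w x : sepw X (rcons w x) -> sepw X w /\ separated PW X w x.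
Proof.
move=> H.
suff : forall v, sepw X v -> v = rcons w x -> sepw X w /\ separated PW X w x.
  by move=> /(_ _ H erefl).
move=> v; case => [|w0 x0 s0 sep0].
  by move/(f_equal size); rewrite size_rcons.
by move/rcons_inj => [<- <-].
Qed.

Lemma inj_core : forall w0, sepw X w0 -> forall w' (m m' : Sbt), sepw X w' -> clsmap m w0 = clsmap m' w' ->
  exists (g : Permt) (C : seq nat), [/\ psupp PW C w0, w' = map (act g) w0 &
     {in C, forall c, proj1_sig m c = proj1_sig m' (proj1_sig g c)}].
Proof.
move=> w0; elim=> [|w x sw IH [A [B [HA HB AB]]]] w' m m' sw'.
  case: w' sw' => // _ _; by exists pid, [::].
case/lastP: w' sw' => [|w' x'] sw'.
  by move/(f_equal size); rewrite size_map size_rcons.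
have [sw'0 [A' [B' [HA' HB' AB']]]] := sepw_rcons sw'.
rewrite /clsmap !map_rcons => /rcons_inj [E1 E2].
have [g [C [HC Hw' Hg]]] := IH w' m m' sw'0 E1.
have E2' : FR (m, x) (m', x') by rewrite E2; apply: FR_refl.
have [h [D [/= HD Hx' Hh]]] := FR_ER Hid Hc Hs E2'.
have [gi [Kg1 Kg2]] := perm_inv g.
have [hi [Kh1 Kh2]] := perm_inv h.
pose C1 := [seq a <- [seq a <- C | a \in A] | a \in map (proj1_sig gi) A'].
pose D1 := [seq a <- [seq a <- D | a \in B] | a \in map (proj1_sig hi) B'].
have HC1 : psupp PW C1 w.
  apply: (supp_inter pw_id pw_c pw_supp_ex).
    exact: (supp_inter pw_id pw_c pw_supp_ex HC HA).
  have -> : w = @pact PW gi w' by rewrite Hw' (act_invK pw_id pw_c pw_supp_ex _ Kg1).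
  exact: (psupp_act pw_c HA').
have HD1 : psupp X D1 x.
  apply: (supp_inter Hid Hc Hs).
    exact: (supp_inter Hid Hc Hs HD HB).
  have -> : x = act hi x' by rewrite Hx' (act_invK Hid Hc Hs _ Kh1).
  exact: (psupp_act Hc HB').
have C1P : forall a, a \in C1 -> [/\ a \in C, a \in A & proj1_sig g a \in A'].
  move=> a; rewrite !mem_filter => /andP[/mapP[b bA' ->] /andP[-> ->]].
  by rewrite Kg2.
have D1P : forall a, a \in D1 -> [/\ a \in D, a \in B & proj1_sig h a \in B'].
  move=> a; rewrite !mem_filter => /andP[/mapP[b bB' ->] /andP[-> ->]].
  by rewrite Kh2.
have D1C1 : forall a, a \in D1 -> a \notin C1.
  move=> a /D1P [_ aB _]; apply/negP => /C1P [_ aA _].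
  by move: (AB a aA); rewrite aB.
pose f a := if a \in C1 then proj1_sig g a else proj1_sig h a.
have [k Hk] : exists k : Permt, {in C1 ++ D1, proj1_sig k =1 f}.
  apply: ext_perm => a b; rewrite /f !mem_cat.
  case: (boolP (a \in C1)) => aC1; case: (boolP (b \in C1)) => bC1 //= Ha Hb.
  - exact: (can_inj Kg1).
  - have [_ _ gA] := C1P a aC1; have [_ _ hB] := D1P b Hb.
    by move=> e; move: (AB' _ gA); rewrite e hB.
  - have [_ _ gA] := C1P b bC1; have [_ _ hB] := D1P a Ha.
    by move=> e; move: (AB' _ gA); rewrite -e hB.
  - exact: (can_inj Kh1).
exists k, (C1 ++ D1); split.
- apply/pw_rcons; split.
    by apply: psupp_mono HC1 _ => a; rewrite mem_cat => ->.
  by apply: psupp_mono HD1 _ => a; rewrite mem_cat => ->; rewrite orbT.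
- rewrite map_rcons Hw' Hx'; congr rcons.
    by apply: HC1 => a aC1; rewrite Hk ?mem_cat ?aC1 // /f aC1.
  by apply: HD1 => a aD1; rewrite Hk ?mem_cat ?aD1 ?orbT // /f (negbTE (D1C1 a aD1)).
- move=> a; rewrite mem_cat => /orP[aC1|aD1].
    by rewrite Hk ?mem_cat ?aC1 // /f aC1; have [aC _ _] := C1P a aC1; apply: Hg.
  rewrite Hk ?mem_cat ?aD1 ?orbT // /f (negbTE (D1C1 a aD1)).
  by have [aD _ _] := D1P a aD1; apply: Hh.
Qed.

Lemma surj_core (qs : seq (scar (F X))) :
  exists (m : Sbt) (w : seq (pcar X)), sepw X w /\ clsmap m w = qs.
Proof.
elim/last_ind: qs => [|qs q [m [w [sw E]]]]; first by exists sid, [::]; split => //; apply: sepw0.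
rewrite -(cls_repr q); case: (repr q) => a x.
have [A HA] := pw_supp_ex w.
have [C HC] := Hs x.
pose M := sumn A.
have leM : forall c, c \in A -> c <= M by move=> c; apply: le_sumn.
pose fp c := M.+1 + index c C.
have [p Hp] : exists p : Permt, {in C, proj1_sig p =1 fp}.
  apply: ext_perm => c d cC dC; rewrite /fp => /addnI e.
  by rewrite -(nth_index 0 cC) e nth_index.
pose mf b := if (M < b) && (b - M.+1 < size C) then proj1_sig a (nth 0 C (b - M.+1))
             else proj1_sig m b.
have Smf : isSb mf.
  have [s Hs'] := proj2_sig m.
  exists (iota M.+1 (size C) ++ s) => b; rewrite mem_cat negb_or mem_iota => /andP[H1 H2].
  rewrite /mf; case: ifP => [/andP[Mb Hb]|_]; last exact: Hs'.
  move: H1 Mb Hb; clear; lia.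
pose m2 : Sbt := exist _ mf Smf.
exists m2, (rcons w (act p x)); split.
  apply: sepwS => //; exists A, (map (proj1_sig p) C); split => //.
    exact: psupp_act.
  move=> c cA; apply/mapP => [[d dC]]; rewrite Hp // /fp => e.
  by move: (leM c cA); rewrite e addSn ltnNge leq_addr.
rewrite /clsmap map_rcons; congr rcons.
  rewrite -E; apply: clsmap_supp HA _ => c cA /=.
  by rewrite /mf (ltnNge M c) leM.
apply: cls_eq; apply: FR_trans; first exact: (FR_step (Fgen_perm m2 p x)).
apply: FR_step; apply: (Fgen_supp HC) => c cC /=.
rewrite Hp // /mf /fp.
have -> : M.+1 + index c C - M.+1 = index c C by lia.
have -> : M < M.+1 + index c C by lia.
by rewrite index_mem cC /= nth_index.
Qed.
End XS.

Lemma inj_surj_bij (A B : Type) (f : A -> B) :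
  (forall a b, f a = f b -> a = b) -> (forall b, exists a, f a = b) -> bijective f.
Proof.
move=> Hi Hs; pose g b := proj1_sig (constructive_indefinite_description _ (Hs b)).
have Kg : cancel g f by move=> b; rewrite /g; case: constructive_indefinite_description.
by exists g => // a; apply: Hi; rewrite Kg.
Qed.

Theorem mainTheorem7 (X : pset) (HX : is_nominal_perm X) :
  [/\ is_nominal_sb (F (Xstar HX)),
      is_nominal_sb (swords (F X))
    & sset_iso (F (Xstar HX)) (swords (F X))].
Proof.
case: HX => Hid Hc Hs.
have [h1 h2 h3] := F_nominal Hs.
split.
- exact: F_nominal (@XS_s X Hid Hc Hs).
- split.
  + by move=> qs /=; rewrite (eq_map h1) map_id.
  + by move=> m n qs /=; rewrite -map_comp; apply: eq_map => q; apply: h2.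
  + elim=> [|q qs [C HC]]; first by exists [::].
    have [D HD] := h3 q.
    exists (D ++ C) => m1 m2 E /=; congr cons.
      by apply: HD => a aD; apply: E; rewrite mem_cat aD.
    by apply: HC => a aC; apply: E; rewrite mem_cat aC orbT.
- exists (@Phi X Hid Hc Hs); split; last by move=> m q; apply: Phi_equiv.
  apply: inj_surj_bij.
    move=> q1 q2; rewrite -(cls_repr q1) -(cls_repr q2) !Phi_cls.
    case: (repr q1) => m [w sw]; case: (repr q2) => m' [w' sw'] E.
    apply: cls_eq; apply: ER_FR.
    have [g [C [HC Hw Hg]]] := inj_core Hid Hc Hs sw sw' E.
    exists g, C; split => //=.
      by apply/XS_supp.
    by apply: sig_eq.
  move=> qs; have [m [w [sw E]]] := surj_core Hc Hs qs.
  exists (cls (@Fequiv (Xstar (And3 Hid Hc Hs))) (m, exist _ w sw)).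
  by rewrite Phi_cls.
Qed.
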